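(* Let $G$ be an open localic groupoid and let $X_i$ be principal $G$-bundles over locales $M_i$, $i=1,2,3,4$. Suppose $\gamma_2:X_1\to X_2$, $\gamma_3:X_1\to X_3$, $\delta_2:X_2\to X_4$, $\delta_3:X_3\to X_4$ are equivariant maps with $\delta_2\circ\gamma_2=\delta_3\circ\gamma_3$, and let $\beta_2:M_1\to M_2$, $\beta_3:M_1\to M_3$, $\alpha_2:M_2\to M_4$, $\alpha_3:M_3\to M_4$ be the corresponding induced maps between the base locales (so $\alpha_2\circ\beta_2=\alpha_3\circ\beta_3$). Then the square formed by $\gamma_2,\gamma_3,\delta_2,\delta_3$ is a pullback in $\mathbf{Loc}$ if and only if the square formed by $\beta_2,\beta_3,\alpha_2,\alpha_3$ is a pullback in $\mathbf{Loc}$.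
   Context: An open localic groupoid $G$ has locales $G_0,G_1$ with structure maps, domain map $d$ open. A left $G$-locale is a locale $X$ with anchor $p:X\to G_0$ and associative unital action $a:G_1\times_{G_0}X\to X$; equivariant maps commute with anchors and actions. A principal $G$-bundle over $M$ is a $G$-locale with $\pi:X\to M$, $\pi\circ a=\pi\circ\pi_2$, $\langle a,\pi_2\rangle:G_1\times_{G_0}X\to X\times_MX$ an isomorphism and $\pi$ an open surjection; then $M\cong X/G$ (coequalizer of $a$ and $\pi_2$), and an equivariant map $f:X\to Y$ between principal bundles induces a map $f/G$ between base locales with $\pi_Y\circ f=(f/G)\circ\pi_X$. *)

(* Defs.v *)
Set Implicit Arguments.
Unset Strict Implicit.

Record Frame := {
  opens :> Type;
  fle : opens -> opens -> Prop;
  fle_refl : forall a, fle a a;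
  fle_trans : forall a b c, fle a b -> fle b c -> fle a c;
  fle_antisym : forall a b, fle a b -> fle b a -> a = b;
  fmeet : opens -> opens -> opens;
  ftop : opens;
  fsup : (opens -> Prop) -> opens;
  fmeet_l : forall a b, fle (fmeet a b) a;
  fmeet_r : forall a b, fle (fmeet a b) b;
  fmeet_glb : forall a b c, fle c a -> fle c b -> fle c (fmeet a b);
  ftop_max : forall a, fle a ftop;
  fsup_ub : forall (S : opens -> Prop) a, S a -> fle a (fsup S);
  fsup_lub : forall (S : opens -> Prop) b, (forall a, S a -> fle a b) -> fle (fsup S) b;
  fdistr : forall a (S : opens -> Prop),
      fmeet a (fsup S) = fsup (fun x => exists s, S s /\ x = fmeet a s)
}.

Notation Locale := Frame.

(* A locale map f : X -> Y is a frame homomorphism f^* : O(Y) -> O(X). *)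
Record LMap (X Y : Locale) := {
  finv :> Y -> X;
  finv_top : finv (ftop Y) = ftop X;
  finv_meet : forall u v, finv (fmeet u v) = fmeet (finv u) (finv v);
  finv_sup : forall S : Y -> Prop,
      finv (fsup S) = fsup (fun x => exists s, S s /\ x = finv s)
}.

Definition lid (X : Locale) : LMap X X.
Proof.
  refine {| finv := fun u => u |}; try reflexivity.
  intro S.
  apply (@fle_antisym X); apply (@fsup_lub X); intros a Ha.
  - apply (@fsup_ub X). exists a; split; auto.
  - destruct Ha as [s [Hs ->]]. apply (@fsup_ub X); auto.
Defined.

Definition lcomp (X Y Z : Locale) (g : LMap Y Z) (f : LMap X Y) : LMap X Z.
Proof.
  refine {| finv := fun w => f (g w) |}.
  - rewrite (finv_top g), (finv_top f); reflexivity.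
  - intros u v; rewrite (finv_meet g), (finv_meet f); reflexivity.
  - intro S. rewrite (finv_sup g), (finv_sup f).
    apply (@fle_antisym X); apply (@fsup_lub X); intros a Ha.
    + destruct Ha as [s [[t [Ht ->]] ->]].
      apply (@fsup_ub X). exists t; split; auto.
    + destruct Ha as [t [Ht ->]].
      apply (@fsup_ub X). exists (g t); split; auto. exists t; auto.
Defined.

Infix "\o" := lcomp (at level 40, left associativity).

Definition meq (X Y : Locale) (f g : LMap X Y) : Prop := forall u, f u = g u.
Infix "==L" := meq (at level 70).

Definition is_iso (X Y : Locale) (f : LMap X Y) : Prop :=
  exists g : LMap Y X, g \o f ==L lid X /\ f \o g ==L lid Y.

(* Pullback squares in Loc:
       P --p2--> B
       |         |
      p1         g
       v         v
       A --f-->  C                                                   *)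
Definition is_pullback (A B C P : Locale) (f : LMap A C) (g : LMap B C)
  (p1 : LMap P A) (p2 : LMap P B) : Prop :=
  f \o p1 ==L g \o p2 /\
  forall (Q : Locale) (q1 : LMap Q A) (q2 : LMap Q B),
    f \o q1 ==L g \o q2 ->
    exists h : LMap Q P, p1 \o h ==L q1 /\ p2 \o h ==L q2 /\
      forall h' : LMap Q P, p1 \o h' ==L q1 -> p2 \o h' ==L q2 -> h' ==L h.

(* f is open iff f^* has a left adjoint f_! satisfying Frobenius reciprocity. *)
Definition is_open_map (X Y : Locale) (f : LMap X Y) : Prop :=
  exists fsh : X -> Y,
    (forall a b, @fle Y (fsh a) b <-> @fle X a (f b)) /\
    (forall a b, fsh (fmeet a (f b)) = fmeet (fsh a) b).

Definition is_surjection (X Y : Locale) (f : LMap X Y) : Prop :=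
  forall u v, f u = f v -> u = v.

Definition is_open_surjection (X Y : Locale) (f : LMap X Y) : Prop :=
  is_open_map f /\ is_surjection f.

(* ---------- Open localic groupoids ----------
   Composable pairs (g,h) satisfy d g = c h; G2 = G1 x_{G0} G1 is a chosen
   pullback of d and c with projections pr1, pr2, and m : G2 -> G1 is the
   multiplication (g,h) |-> g h.  The axioms are stated on generalized elements
   (maps from arbitrary locales Q), which is the usual internal formulation. *)
Record OpenLocGroupoid := {
  G0 : Locale;
  G1 : Locale;
  gd : LMap G1 G0;
  gc : LMap G1 G0;
  ge : LMap G0 G1;
  gi : LMap G1 G1;
  G2 : Locale;
  gpr1 : LMap G2 G1;
  gpr2 : LMap G2 G1;
  G2_pb : is_pullback gd gc gpr1 gpr2;
  gm : LMap G2 G1;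
  gd_e : gd \o ge ==L lid G0;
  gc_e : gc \o ge ==L lid G0;
  gd_i : gd \o gi ==L gc;
  gc_i : gc \o gi ==L gd;
  gd_m : gd \o gm ==L gd \o gpr2;
  gc_m : gc \o gm ==L gc \o gpr1;
  gm_unit_l : forall (Q : Locale) (x : LMap Q G1) (h : LMap Q G2),
      gpr1 \o h ==L ge \o (gc \o x) -> gpr2 \o h ==L x -> gm \o h ==L x;
  gm_unit_r : forall (Q : Locale) (x : LMap Q G1) (h : LMap Q G2),
      gpr1 \o h ==L x -> gpr2 \o h ==L ge \o (gd \o x) -> gm \o h ==L x;
  gm_inv_r : forall (Q : Locale) (x : LMap Q G1) (h : LMap Q G2),
      gpr1 \o h ==L x -> gpr2 \o h ==L gi \o x -> gm \o h ==L ge \o (gc \o x);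
  gm_inv_l : forall (Q : Locale) (x : LMap Q G1) (h : LMap Q G2),
      gpr1 \o h ==L gi \o x -> gpr2 \o h ==L x -> gm \o h ==L ge \o (gd \o x);
  gm_assoc : forall (Q : Locale) (x y z : LMap Q G1) (h12 h23 ha hb : LMap Q G2),
      gpr1 \o h12 ==L x -> gpr2 \o h12 ==L y ->
      gpr1 \o h23 ==L y -> gpr2 \o h23 ==L z ->
      gpr1 \o ha ==L gm \o h12 -> gpr2 \o ha ==L z ->
      gpr1 \o hb ==L x -> gpr2 \o hb ==L gm \o h23 ->
      gm \o ha ==L gm \o hb;
  gd_open : is_open_map gd
}.

Record GLocale (G : OpenLocGroupoid) := {
  gX : Locale;
  anchor : LMap gX (G0 G);
  actdom : Locale;
  aq1 : LMap actdom (G1 G);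
  aq2 : LMap actdom gX;
  actdom_pb : is_pullback (gd G) anchor aq1 aq2;
  act : LMap actdom gX;
  anchor_act : anchor \o act ==L gc G \o aq1;
  act_unit : forall (Q : Locale) (x : LMap Q gX) (h : LMap Q actdom),
      aq1 \o h ==L ge G \o (anchor \o x) -> aq2 \o h ==L x -> act \o h ==L x;
  act_assoc : forall (Q : Locale) (g1 g2 : LMap Q (G1 G)) (x : LMap Q gX)
      (n : LMap Q (G2 G)) (h k l : LMap Q actdom),
      gpr1 G \o n ==L g1 -> gpr2 G \o n ==L g2 ->
      aq1 \o h ==L g2 -> aq2 \o h ==L x ->
      aq1 \o k ==L g1 -> aq2 \o k ==L act \o h ->
      aq1 \o l ==L gm G \o n -> aq2 \o l ==L x ->
      act \o k ==L act \o l
}.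

(* Equivariant maps: commute with anchors and actions.  The map
   id x f : G1 x_{G0} X -> G1 x_{G0} Y is any map with the right projections
   (it is unique by the pullback property). *)
Definition equivariant (G : OpenLocGroupoid) (X Y : GLocale G)
  (f : LMap (gX X) (gX Y)) : Prop :=
  anchor Y \o f ==L anchor X /\
  forall k : LMap (actdom X) (actdom Y),
    aq1 Y \o k ==L aq1 X -> aq2 Y \o k ==L f \o aq2 X ->
    f \o act X ==L act Y \o k.

Record PrincipalBundle (G : OpenLocGroupoid) (X : GLocale G) (M : Locale) := {
  bpi : LMap (gX X) M;
  bpi_inv : bpi \o act X ==L bpi \o aq2 X;
  kerpair : Locale;
  bk1 : LMap kerpair (gX X);
  bk2 : LMap kerpair (gX X);
  kerpair_pb : is_pullback bpi bpi bk1 bk2;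
  bprincipal : exists t : LMap (actdom X) kerpair,
      bk1 \o t ==L act X /\ bk2 \o t ==L aq2 X /\ is_iso t;
  bpi_opensurj : is_open_surjection bpi
}.

(* Main.v *)
Require Import Defs.
From Stdlib Require Import FunctionalExtensionality PropExtensionality ProofIrrelevance.
Set Implicit Arguments.
Unset Strict Implicit.

Ltac mle := solve [ assumption | apply fle_refl | apply ftop_max
  | apply fmeet_glb; mle
  | eapply fle_trans; [apply fmeet_l | mle]
  | eapply fle_trans; [apply fmeet_r | mle] ].

Section FrameFacts.
Variable X : Frame.

Lemma le_antisym' (a b : X) : fle a b -> fle b a -> a = b.
Proof. apply fle_antisym. Qed.

Lemma meet_top_r (a : X) : fmeet a (ftop X) = a.
Proof. apply fle_antisym; mle. Qed.
Lemma meet_top_l (a : X) : fmeet (ftop X) a = a.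
Proof. apply fle_antisym; mle. Qed.
Lemma meet_eq_le (a b : X) : fle a b -> fmeet a b = a.
Proof. intro; apply fle_antisym; mle. Qed.

Lemma sup_ext (S T : X -> Prop) : (forall x, S x <-> T x) -> fsup S = fsup T.
Proof.
  intro H; apply fle_antisym; apply fsup_lub; intros a Ha; apply fsup_ub; apply H; auto.
Qed.

Lemma meet_sup_le (x w : X) (S : X -> Prop) :
  (forall s, S s -> fle (fmeet x s) w) -> fle (fmeet x (fsup S)) w.
Proof.
  intro H. rewrite fdistr. apply fsup_lub. intros a [s [Hs ->]]. auto.
Qed.

Lemma sup_meet_le (x w : X) (S : X -> Prop) :
  (forall s, S s -> fle (fmeet s x) w) -> fle (fmeet (fsup S) x) w.
Proof.
  intro H. eapply fle_trans; [| apply (meet_sup_le (x:=x))].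
  - apply fmeet_glb; [apply fmeet_r | apply fmeet_l].
  - intros s Hs. eapply fle_trans; [| apply (H s Hs)]. mle.
Qed.
End FrameFacts.

Lemma map_mono (X Y : Frame) (f : LMap X Y) (u v : Y) : fle u v -> fle (f u) (f v).
Proof.
  intro H. rewrite <- (meet_eq_le H). rewrite finv_meet. apply fmeet_r.
Qed.

Lemma map_sup_le (X Y : Frame) (f : LMap X Y) (S : Y -> Prop) (w : X) :
  (forall s, S s -> fle (f s) w) -> fle (f (fsup S)) w.
Proof.
  intro H. rewrite finv_sup. apply fsup_lub. intros a [s [Hs ->]]; auto.
Qed.

Lemma le_map_sup (X Y : Frame) (f : LMap X Y) (S : Y -> Prop) s :
  S s -> fle (f s) (f (fsup S)).
Proof. intro; apply map_mono; apply fsup_ub; auto. Qed.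

Section PB.
Variables (A B C : Frame) (f : LMap A C) (g : LMap B C).

Definition downset (D : A -> B -> Prop) :=
  forall a b a' b', D a b -> fle a' a -> fle b' b -> D a' b'.

Definition sat (D : A -> B -> Prop) : Prop :=
  downset D /\
  (forall (S : A -> Prop) b, (forall s, S s -> D s b) -> D (fsup S) b) /\
  (forall a (S : B -> Prop), (forall s, S s -> D a s) -> D a (fsup S)) /\
  (forall a b c, D (fmeet a (f c)) b -> D a (fmeet b (g c))) /\
  (forall a b c, D a (fmeet b (g c)) -> D (fmeet a (f c)) b).

Lemma sat_down D : sat D -> downset D. Proof. intros [H _]; exact H. Qed.
Lemma sat_supl D : sat D -> forall (S : A -> Prop) b, (forall s, S s -> D s b) -> D (fsup S) b.
Proof. intros [_ [H _]]; exact H. Qed.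
Lemma sat_supr D : sat D -> forall a (S : B -> Prop), (forall s, S s -> D a s) -> D a (fsup S).
Proof. intros [_ [_ [H _]]]; exact H. Qed.
Lemma sat_fg D : sat D -> forall a b c, D (fmeet a (f c)) b -> D a (fmeet b (g c)).
Proof. intros [_ [_ [_ [H _]]]]; exact H. Qed.
Lemma sat_gf D : sat D -> forall a b c, D a (fmeet b (g c)) -> D (fmeet a (f c)) b.
Proof. intros [_ [_ [_ [_ H]]]]; exact H. Qed.

Record PE := mkPE { pset : A -> B -> Prop; psat : sat pset }.

Lemma PE_ext (D E : PE) : (forall a b, pset D a b <-> pset E a b) -> D = E.
Proof.
  destruct D as [d hd], E as [e he]; simpl; intro H.
  assert (d = e) by (apply functional_extensionality; intro a;
    apply functional_extensionality; intro b; apply propositional_extensionality; auto).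
  subst e. f_equal. apply proof_irrelevance.
Qed.

Definition cl (U : A -> B -> Prop) : A -> B -> Prop :=
  fun a b => forall E, sat E -> (forall x y, U x y -> E x y) -> E a b.

Lemma cl_sat U : sat (cl U).
Proof.
  split; [|split; [|split; [|split]]].
  - intros a b a' b' H h1 h2 E HE HU. apply (sat_down HE) with a b; auto. apply H; auto.
  - intros S b H E HE HU. apply (sat_supl HE). intros s Hs. apply H; auto.
  - intros a S H E HE HU. apply (sat_supr HE). intros s Hs. apply H; auto.
  - intros a b c H E HE HU. apply (sat_fg HE). apply H; auto.
  - intros a b c H E HE HU. apply (sat_gf HE). apply H; auto.
Qed.

Lemma cl_incl (U : A -> B -> Prop) a b : U a b -> cl U a b.
Proof. intros H E HE HU; auto. Qed.

Lemma cl_min (U E : A -> B -> Prop) : sat E -> (forall x y, U x y -> E x y) ->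
  forall a b, cl U a b -> E a b.
Proof. intros HE HU a b H; apply H; auto. Qed.

Lemma cl_mono (U V : A -> B -> Prop) : (forall x y, U x y -> V x y) ->
  forall a b, cl U a b -> cl V a b.
Proof.
  intros HUV. apply cl_min; [apply cl_sat|]. intros; apply cl_incl; auto.
Qed.

Definition imp (D T : A -> B -> Prop) : A -> B -> Prop :=
  fun a b => forall a' b', fle a' a -> fle b' b -> D a' b' -> T a' b'.

Lemma imp_sat D T : downset D -> sat T -> sat (imp D T).
Proof.
  intros HD HT. split; [|split; [|split; [|split]]].
  - intros a b a' b' H h1 h2 a'' b'' k1 k2 Hd. apply H; auto; eapply fle_trans; eauto.
  - intros S b H a' b' h1 h2 Hd.
    rewrite <- (meet_eq_le h1). rewrite fdistr.
    apply (sat_supl HT). intros x [s [Hs ->]].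
    apply (H s Hs); auto. apply fmeet_r.
    apply HD with a' b'; auto. apply fmeet_l. apply fle_refl.
  - intros a S H a' b' h1 h2 Hd.
    rewrite <- (meet_eq_le h2). rewrite fdistr.
    apply (sat_supr HT). intros x [s [Hs ->]].
    apply (H s Hs); auto. apply fmeet_r.
    apply HD with a' b'; auto. apply fle_refl. apply fmeet_l.
  - intros a b c H a' b' h1 h2 Hd.
    assert (E : fmeet b' (g c) = b') by (apply meet_eq_le; eapply fle_trans; [exact h2|apply fmeet_r]).
    rewrite <- E. apply (sat_fg HT). apply H.
    + apply fmeet_glb; [eapply fle_trans; [apply fmeet_l|exact h1] | apply fmeet_r].
    + eapply fle_trans; [exact h2|apply fmeet_l].
    + apply HD with a' b'; auto; [apply fmeet_l|apply fle_refl].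
  - intros a b c H a' b' h1 h2 Hd.
    assert (E : fmeet a' (f c) = a') by (apply meet_eq_le; eapply fle_trans; [exact h1|apply fmeet_r]).
    rewrite <- E. apply (sat_gf HT). apply H.
    + eapply fle_trans; [exact h1|apply fmeet_l].
    + apply fmeet_glb; [eapply fle_trans; [apply fmeet_l|exact h2] | apply fmeet_r].
    + apply HD with a' b'; auto; [apply fle_refl|apply fmeet_l].
Qed.

Lemma cl_meet_down (U V : A -> B -> Prop) : downset U -> downset V ->
  forall a b, cl U a b -> cl V a b -> cl (fun x y => U x y /\ V x y) a b.
Proof.
  intros HU HV.
  set (T := cl (fun x y => U x y /\ V x y)).
  assert (S1 : forall a b, cl V a b -> imp U T a b).
  { apply cl_min. apply imp_sat; auto. apply cl_sat.
    intros x y Hv a' b' h1 h2 Hu. apply cl_incl. split; auto. apply HV with x y; auto. }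
  assert (S2 : forall a b, cl U a b -> imp (cl V) T a b).
  { apply cl_min. apply imp_sat; auto. apply sat_down, cl_sat. apply cl_sat.
    intros x y Hu a' b' h1 h2 Hv. apply (S1 _ _ Hv); try apply fle_refl.
    apply HU with x y; auto. }
  intros a b Ha Hb. apply (S2 _ _ Ha); auto; apply fle_refl.
Qed.

Lemma meet_sat D E : sat D -> sat E -> sat (fun a b => D a b /\ E a b).
Proof.
  intros HD HE. split; [|split; [|split; [|split]]].
  - intros a b a' b' [H1 H2] h1 h2; split; [apply (sat_down HD) with a b|apply (sat_down HE) with a b]; auto.
  - intros S b H; split; [apply (sat_supl HD)|apply (sat_supl HE)]; intros s Hs; apply H; auto.
  - intros a S H; split; [apply (sat_supr HD)|apply (sat_supr HE)]; intros s Hs; apply H; auto.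
  - intros a b c [H1 H2]; split; [apply (sat_fg HD)|apply (sat_fg HE)]; auto.
  - intros a b c [H1 H2]; split; [apply (sat_gf HD)|apply (sat_gf HE)]; auto.
Qed.

Lemma top_sat : sat (fun _ _ => True).
Proof. split; [|split; [|split; [|split]]]; repeat intro; exact I. Qed.

Definition Ple (D E : PE) := forall a b, pset D a b -> pset E a b.
Definition Pmeet (D E : PE) : PE := mkPE (meet_sat (psat D) (psat E)).
Definition Ptop : PE := mkPE top_sat.
Definition Psup (S : PE -> Prop) : PE :=
  mkPE (cl_sat (fun a b => exists D, S D /\ pset D a b)).

Lemma Pdistr (D : PE) (S : PE -> Prop) :
  Pmeet D (Psup S) = Psup (fun x => exists s, S s /\ x = Pmeet D s).
Proof.
  apply PE_ext; intros a b; simpl; split.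
  - intros [Hd Hs].
    set (T := cl (fun a0 b0 => exists D0 : PE, (exists s : PE, S s /\ D0 = Pmeet D s) /\ pset D0 a0 b0)).
    assert (K : forall a b, cl (fun a0 b0 => exists D0 : PE, S D0 /\ pset D0 a0 b0) a b -> imp (pset D) T a b).
    { apply cl_min. apply imp_sat. apply sat_down, psat. apply cl_sat.
      intros x y [s [Hs' Hxy]] a' b' h1 h2 Hd'. apply cl_incl.
      exists (Pmeet D s). split; [exists s; auto|]. simpl. split; auto.
      apply (sat_down (psat s)) with x y; auto. }
    apply (K _ _ Hs); auto; apply fle_refl.
  - apply (cl_min (E := fun x y => _ /\ _) (meet_sat (psat D) (cl_sat _))).
    intros x y [D0 [[s [Hs ->]] [H1 H2]]]. split; auto. apply cl_incl. exists s; auto.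
Qed.

Definition PBF : Frame.
Proof.
  refine {| opens := PE; fle := Ple; fmeet := Pmeet; ftop := Ptop; fsup := Psup |}.
  - intros a x y H; exact H.
  - intros a b c H1 H2 x y H; auto.
  - intros a b H1 H2; apply PE_ext; split; auto.
  - intros a b x y [H _]; exact H.
  - intros a b x y [_ H]; exact H.
  - intros a b c H1 H2 x y H; split; auto.
  - intros a x y _; exact I.
  - intros S a H x y Hxy. apply cl_incl. exists a; auto.
  - intros S b H x y Hxy. simpl in Hxy. revert Hxy. apply cl_min. apply psat.
    intros x' y' [D [HD HH]]. apply (H D HD); auto.
  - apply Pdistr.
Defined.

Definition pe (a : A) (b : B) : PBF := mkPE (cl_sat (fun x y => fle x a /\ fle y b)).

Lemma pe_meet a b a' b' :
  @fmeet PBF (pe a b) (pe a' b') = pe (fmeet a a') (fmeet b b').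
Proof.
  apply PE_ext; intros x y; simpl; split.
  - intros [H1 H2]. eapply cl_mono; [|apply cl_meet_down; [| |exact H1|exact H2]].
    + intros u v [[k1 k2] [k3 k4]]. split; apply fmeet_glb; auto.
    + intros u v u' v' [k1 k2] h1 h2; split; eapply fle_trans; eauto.
    + intros u v u' v' [k1 k2] h1 h2; split; eapply fle_trans; eauto.
  - intros H; split; eapply cl_mono; try exact H; intros u v [k1 k2]; split;
      (eapply fle_trans; [eassumption|]); mle.
Qed.

Lemma pe_supl (S : A -> Prop) b :
  pe (fsup S) b = @fsup PBF (fun x => exists s, S s /\ x = pe s b).
Proof.
  apply PE_ext; intros x y; simpl; split.
  - apply cl_min. apply cl_sat. intros u v [h1 h2].
    apply (sat_down (cl_sat _)) with (fsup S) b; auto.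
    apply (sat_supl (cl_sat _)). intros s Hs. apply cl_incl.
    exists (pe s b). split. exists s; auto. simpl. apply cl_incl; split; apply fle_refl.
  - apply cl_min. apply (psat (pe (fsup S) b)).
    intros u v [D [[s [Hs ->]] HH]]. simpl in HH. eapply cl_mono; [|exact HH].
    intros u' v' [k1 k2]; split; auto. eapply fle_trans; [exact k1|]. apply fsup_ub; auto.
Qed.

Lemma pe_supr a (S : B -> Prop) :
  pe a (fsup S) = @fsup PBF (fun x => exists s, S s /\ x = pe a s).
Proof.
  apply PE_ext; intros x y; simpl; split.
  - apply cl_min. apply cl_sat. intros u v [h1 h2].
    apply (sat_down (cl_sat _)) with a (fsup S); auto.
    apply (sat_supr (cl_sat _)). intros s Hs. apply cl_incl.
    exists (pe a s). split. exists s; auto. simpl. apply cl_incl; split; apply fle_refl.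
  - apply cl_min. apply (psat (pe a (fsup S))).
    intros u v [D [[s [Hs ->]] HH]]. simpl in HH. eapply cl_mono; [|exact HH].
    intros u' v' [k1 k2]; split; auto. eapply fle_trans; [exact k2|]. apply fsup_ub; auto.
Qed.

Lemma pe_top : pe (ftop A) (ftop B) = ftop PBF.
Proof.
  apply PE_ext; intros x y; simpl; split; auto. intros _. apply cl_incl; split; apply ftop_max.
Qed.

Definition pr1 : LMap PBF A.
Proof.
  refine {| finv := fun a => pe a (ftop B) |}.
  - apply pe_top.
  - intros u v. rewrite pe_meet. rewrite meet_top_r. reflexivity.
  - intros S. apply pe_supl.
Defined.

Definition pr2 : LMap PBF B.
Proof.
  refine {| finv := fun b => pe (ftop A) b |}.
  - apply pe_top.
  - intros u v. rewrite pe_meet. rewrite meet_top_r. reflexivity.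
  - intros S. apply pe_supr.
Defined.

Lemma pr_comm : f \o pr1 ==L g \o pr2.
Proof.
  intro c. simpl. apply PE_ext; intros x y; simpl; split.
  - apply cl_min. apply cl_sat. intros u v [h1 h2].
    apply (sat_down (cl_sat _)) with (fmeet (ftop A) (f c)) v; [| |apply fle_refl].
    + apply (sat_gf (cl_sat _)). apply cl_incl. split; [apply fle_refl|apply fmeet_r].
    + apply fmeet_glb; auto; apply ftop_max.
  - apply cl_min. apply cl_sat. intros u v [h1 h2].
    apply (sat_down (cl_sat _)) with u (fmeet (ftop B) (g c)); [| apply fle_refl|].
    + apply (sat_fg (cl_sat _)). apply cl_incl. split; [apply fmeet_r|apply fle_refl].
    + apply fmeet_glb; auto; apply ftop_max.
Qed.

Lemma PE_decomp (D : PBF) : D = @fsup PBF (fun x => exists a b, pset D a b /\ x = pe a b).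
Proof.
  apply PE_ext; intros x y; simpl; split.
  - intro H. apply cl_incl. exists (pe x y). split; [exists x, y; auto|].
    simpl. apply cl_incl; split; apply fle_refl.
  - apply cl_min. apply psat. intros u v [E [[a [b [Hab ->]]] HH]].
    simpl in HH. revert HH. apply cl_min. apply psat.
    intros u' v' [k1 k2]. apply (sat_down (psat D)) with a b; auto.
Qed.

Section Univ.
Variables (Q : Frame) (q1 : LMap Q A) (q2 : LMap Q B).
Hypothesis Hq : f \o q1 ==L g \o q2.

Definition hfun (D : PBF) : Q :=
  fsup (fun x => exists a b, pset D a b /\ x = fmeet (q1 a) (q2 b)).

Lemma Tw_sat w : sat (fun a b => fle (fmeet (q1 a) (q2 b)) w).
Proof.
  split; [|split; [|split; [|split]]].
  - intros a b a' b' H h1 h2. eapply fle_trans; [|exact H].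
    apply fmeet_glb; [eapply fle_trans; [apply fmeet_l|apply map_mono; auto]
                     |eapply fle_trans; [apply fmeet_r|apply map_mono; auto]].
  - intros S b H. rewrite finv_sup. apply sup_meet_le. intros s [t [Ht ->]]. auto.
  - intros a S H. rewrite finv_sup. apply meet_sup_le. intros s [t [Ht ->]]. auto.
  - intros a b c H. eapply fle_trans; [|exact H].
    rewrite !finv_meet. pose proof (Hq c) as E. simpl in E. rewrite E. mle.
  - intros a b c H. eapply fle_trans; [|exact H].
    rewrite !finv_meet. pose proof (Hq c) as E. simpl in E. rewrite E. mle.
Qed.

Lemma hfun_le (U : A -> B -> Prop) (D : PBF) w :
  (forall a b, pset D a b -> cl U a b) ->
  (forall a b, U a b -> fle (fmeet (q1 a) (q2 b)) w) -> fle (hfun D) w.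
Proof.
  intros HD HU. apply fsup_lub. intros x [a [b [Hab ->]]].
  apply (cl_min (Tw_sat w) HU). auto.
Qed.

Lemma hfun_ge (D : PBF) a b : pset D a b -> fle (fmeet (q1 a) (q2 b)) (hfun D).
Proof. intro H. apply fsup_ub. exists a, b; auto. Qed.

Definition hmap : LMap Q PBF.
Proof.
  refine {| finv := hfun |}.
  - apply fle_antisym; [apply ftop_max|].
    eapply fle_trans; [|apply (hfun_ge (D := ftop PBF) (a := ftop A) (b := ftop B)); exact I].
    rewrite !finv_top. mle.
  - intros u v. apply fle_antisym.
    + apply fmeet_glb; apply fsup_lub; intros x [a [b [[H1 H2] ->]]]; apply hfun_ge; auto.
    + apply sup_meet_le. intros s [a [b [Hab ->]]].
      apply meet_sup_le. intros s' [a' [b' [Hab' ->]]].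
      eapply fle_trans; [|apply (hfun_ge (D := fmeet u v) (a := fmeet a a') (b := fmeet b b'))].
      * rewrite !finv_meet. mle.
      * split; [apply (sat_down (psat u)) with a b|apply (sat_down (psat v)) with a' b']; mle.
  - intros S. apply fle_antisym.
    + apply (hfun_le (U := fun a b => exists D, S D /\ pset D a b)); [auto|].
      intros a b [D [HD Hab]]. eapply fle_trans; [apply (hfun_ge Hab)|].
      apply fsup_ub. exists D; auto.
    + apply fsup_lub. intros x [D [HD ->]]. apply fsup_lub. intros x [a [b [Hab ->]]].
      apply hfun_ge. apply cl_incl. exists D; auto.
Defined.

Lemma hmap_pr1 : pr1 \o hmap ==L q1.
Proof.
  intro a. simpl. apply fle_antisym.
  - apply (hfun_le (U := fun x y => fle x a /\ fle y (ftop B))); auto.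
    intros x y [h1 h2]. eapply fle_trans; [apply fmeet_l|apply map_mono; auto].
  - eapply fle_trans; [|apply (hfun_ge (D := pe a (ftop B)) (a := a) (b := ftop B))].
    + rewrite finv_top. mle.
    + simpl. apply cl_incl; split; apply fle_refl.
Qed.

Lemma hmap_pr2 : pr2 \o hmap ==L q2.
Proof.
  intro b. simpl. apply fle_antisym.
  - apply (hfun_le (U := fun x y => fle x (ftop A) /\ fle y b)); auto.
    intros x y [h1 h2]. eapply fle_trans; [apply fmeet_r|apply map_mono; auto].
  - eapply fle_trans; [|apply (hfun_ge (D := pe (ftop A) b) (a := ftop A) (b := b))].
    + rewrite finv_top. mle.
    + simpl. apply cl_incl; split; apply fle_refl.
Qed.

Lemma hmap_uniq (h' : LMap Q PBF) : pr1 \o h' ==L q1 -> pr2 \o h' ==L q2 -> h' ==L hmap.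
Proof.
  intros H1 H2 D. simpl.
  assert (Hpe : forall a b, h' (pe a b) = fmeet (q1 a) (q2 b)).
  { intros a b.
    assert (E : pe a b = @fmeet PBF (pe a (ftop B)) (pe (ftop A) b)).
    { rewrite pe_meet, meet_top_r, meet_top_l. reflexivity. }
    rewrite E, finv_meet. rewrite <- (H1 a), <- (H2 b). reflexivity. }
  rewrite (PE_decomp D) at 1. rewrite finv_sup. unfold hfun. apply sup_ext.
  intros x; split.
  - intros [s [[a [b [Hab ->]]] ->]]. exists a, b; auto.
  - intros [a [b [Hab ->]]]. exists (pe a b). split; [exists a, b; auto|auto].
Qed.
End Univ.

Lemma pb_is_pullback : is_pullback f g pr1 pr2.
Proof.
  split; [apply pr_comm|].
  intros Q q1 q2 Hq. exists (hmap Hq). split; [apply hmap_pr1|split; [apply hmap_pr2|]].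
  intros h' H1 H2. apply hmap_uniq; auto.
Qed.

Section Open.
Variable gsh : B -> C.
Hypothesis Hadj : forall b c, fle (gsh b) c <-> fle b (g c).
Hypothesis Hfrob : forall b c, gsh (fmeet b (g c)) = fmeet (gsh b) c.

Lemma gsh_unit b : fle b (g (gsh b)).
Proof. apply Hadj, fle_refl. Qed.
Lemma gsh_mono b b' : fle b b' -> fle (gsh b) (gsh b').
Proof. intro; apply Hadj. eapply fle_trans; [eassumption|apply gsh_unit]. Qed.

Lemma Tsh_sat w : sat (fun a b => fle (fmeet a (f (gsh b))) w).
Proof.
  split; [|split; [|split; [|split]]].
  - intros a b a' b' H h1 h2. eapply fle_trans; [|exact H].
    apply fmeet_glb; [eapply fle_trans; [apply fmeet_l|auto]
                     |eapply fle_trans; [apply fmeet_r|apply map_mono, gsh_mono; auto]].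
  - intros S b H. apply sup_meet_le. auto.
  - intros a S H.
    eapply fle_trans.
    + apply fmeet_glb; [apply fmeet_l|]. eapply fle_trans; [apply fmeet_r|].
      apply map_mono. apply (Hadj (fsup S) (fsup (fun y => exists s, S s /\ y = gsh s))).
      apply fsup_lub. intros s Hs. eapply fle_trans; [apply gsh_unit|].
      apply map_mono. apply fsup_ub. exists s; auto.
    + rewrite finv_sup. apply meet_sup_le. intros x [y [[s [Hs ->]] ->]]. auto.
  - intros a b c H. eapply fle_trans; [|exact H].
    rewrite Hfrob, finv_meet. mle.
  - intros a b c H. eapply fle_trans; [|exact H].
    rewrite Hfrob, finv_meet. mle.
Qed.

Definition p1sh (D : PBF) : A :=
  fsup (fun x => exists a b, pset D a b /\ x = fmeet a (f (gsh b))).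

Lemma p1sh_le (D : PBF) w : fle (p1sh D) w <-> fle D (pr1 w).
Proof.
  split.
  - intros H a b Hab. simpl.
    apply (sat_down (cl_sat _)) with a (fmeet b (g (gsh b))).
    + apply (sat_fg (cl_sat _)). apply cl_incl. split; [|apply ftop_max].
      eapply fle_trans; [|exact H]. apply fsup_ub. exists a, b; auto.
    + apply fle_refl.
    + apply fmeet_glb; [apply fle_refl|apply gsh_unit].
  - intros H. apply fsup_lub. intros x [a [b [Hab ->]]].
    specialize (H a b Hab). simpl in H. revert H.
    apply (cl_min (E := fun a b => fle (fmeet a (f (gsh b))) w)). apply Tsh_sat. intros u v [h1 h2]. eapply fle_trans; [apply fmeet_l|auto].
Qed.

Lemma pr1_open : is_open_map pr1.
Proof.
  exists p1sh. split; [intros; apply p1sh_le|].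
  intros D w. apply fle_antisym.
  - apply fmeet_glb.
    + apply fsup_lub. intros x [a [b [[Hab _] ->]]]. apply fsup_ub. exists a, b; auto.
    + apply p1sh_le. intros a b [_ H]; exact H.
  - apply sup_meet_le. intros s [a [b [Hab ->]]].
    eapply fle_trans; [|apply fsup_ub; exists (fmeet a w), b; split; [|reflexivity]].
    + mle.
    + split. apply (sat_down (psat D)) with a b; auto; [apply fmeet_l|apply fle_refl].
      simpl. apply cl_incl. split; [apply fmeet_r|apply ftop_max].
Qed.

Hypothesis Hsurj : gsh (ftop B) = ftop C.

Lemma pr1_surj : is_surjection pr1.
Proof.
  assert (K : forall u, p1sh (pr1 u) = u).
  { intro u. apply fle_antisym.
    - apply p1sh_le. intros x y H; exact H.
    - eapply fle_trans; [|apply fsup_ub; exists u, (ftop B); split; [|reflexivity]].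
      + rewrite Hsurj, finv_top. mle.
      + simpl. apply cl_incl; split; apply fle_refl. }
  intros u v E. rewrite <- (K u), <- (K v), E. reflexivity.
Qed.
End Open.
End PB.

Lemma open_surj_top (X Y : Frame) (p : LMap X Y) (psh : X -> Y) :
  (forall a b, fle (psh a) b <-> fle a (p b)) -> is_surjection p -> psh (ftop X) = ftop Y.
Proof.
  intros Hadj Hs. apply Hs. apply fle_antisym.
  - rewrite finv_top. apply ftop_max.
  - rewrite finv_top. apply Hadj, fle_refl.
Qed.

Lemma pb_open_surj (A B C : Frame) (f : LMap A C) (g : LMap B C) :
  is_open_surjection g -> is_open_surjection (pr1 f g).
Proof.
  intros [[gsh [Hadj Hfrob]] Hs]. split.
  - apply pr1_open with gsh; auto.
  - apply pr1_surj with gsh; auto. apply open_surj_top with g; auto.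
Qed.
Set Implicit Arguments.
Unset Strict Implicit.

Section Descent.
Variables (P A : Frame) (p : LMap P A) (psh : P -> A).
Hypothesis Hadj : forall a b, fle (psh a) b <-> fle a (p b).
Hypothesis Hfrob : forall a b, psh (fmeet a (p b)) = fmeet (psh a) b.
Hypothesis Hsurj : is_surjection p.

Lemma descent_key u : pr1 p p u = pr2 p p u -> p (psh u) = u.
Proof.
  intro E. apply fle_antisym.
  - assert (H : pset (pr2 p p u) (ftop P) u) by (simpl; apply cl_incl; split; apply fle_refl).
    rewrite <- E in H. simpl in H.
    assert (H2 := cl_min (U := fun x y => fle x u /\ fle y (ftop P)) (E := fun a b => fle (fmeet a (p (psh b))) u)
                   (@Tsh_sat _ _ _ p p psh Hadj Hfrob u)).
    assert (H3 : forall x y : P, fle x u /\ fle y (ftop P) -> fle (fmeet x (p (psh y))) u).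
    { intros x y [h1 h2]. eapply fle_trans; [apply fmeet_l|exact h1]. }
    eapply fle_trans; [|apply (H2 H3 _ _ H)].
    apply fmeet_glb; [apply ftop_max|apply fle_refl].
  - apply Hadj, fle_refl.
Qed.

Section DM.
Variables (Z : Frame) (x1 : LMap P Z).
Hypothesis Hinv : x1 \o pr1 p p ==L x1 \o pr2 p p.

Lemma dkey z : p (psh (x1 z)) = x1 z.
Proof. apply descent_key. exact (Hinv z). Qed.

Definition desc_map : LMap A Z.
Proof.
  refine {| finv := fun z => psh (x1 z) |}.
  - apply Hsurj. rewrite dkey, !finv_top. reflexivity.
  - intros u v. apply Hsurj. rewrite dkey, !finv_meet, !dkey. reflexivity.
  - intros S. apply Hsurj. rewrite dkey, !finv_sup. apply sup_ext. intros x; split.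
    + intros [s [Hs ->]]. exists (psh (x1 s)). split; [exists s; auto|]. rewrite dkey; reflexivity.
    + intros [y [[s [Hs ->]] ->]]. exists s. rewrite dkey; auto.
Defined.

Lemma desc_comm : desc_map \o p ==L x1.
Proof. intro z. simpl. apply dkey. Qed.
End DM.
End Descent.

Lemma descent (P A : Frame) (p : LMap P A) : is_open_surjection p ->
  forall Z (x1 : LMap P Z), x1 \o pr1 p p ==L x1 \o pr2 p p ->
  exists x : LMap A Z, x \o p ==L x1.
Proof.
  intros [[psh [Hadj Hfrob]] Hs] Z x1 Hinv.
  exists (desc_map Hadj Hfrob Hs Hinv). apply desc_comm.
Qed.

Lemma mr (X Y : Locale) (a : LMap X Y) : a ==L a.
Proof. intro; reflexivity. Qed.
Lemma ms (X Y : Locale) (a b : LMap X Y) : a ==L b -> b ==L a.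
Proof. intros H u; symmetry; apply H. Qed.
Lemma mt (X Y : Locale) (a b c : LMap X Y) : a ==L b -> b ==L c -> a ==L c.
Proof. intros H1 H2 u; rewrite H1; apply H2. Qed.
Lemma ml (X Y Z : Locale) (h : LMap X Y) (f f' : LMap Y Z) : f ==L f' -> f \o h ==L f' \o h.
Proof. intros H u; simpl; rewrite H; reflexivity. Qed.
Lemma mrr (X Y Z : Locale) (f : LMap Y Z) (h h' : LMap X Y) : h ==L h' -> f \o h ==L f \o h'.
Proof. intros H u; simpl; apply H. Qed.

Lemma epi_cancel (X Y Z : Locale) (p : LMap X Y) (a b : LMap Y Z) :
  is_surjection p -> a \o p ==L b \o p -> a ==L b.
Proof. intros Hs H u. apply Hs. apply H. Qed.

Lemma pb_lift (A B C P : Locale) (f : LMap A C) (g : LMap B C) (p1 : LMap P A) (p2 : LMap P B)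
  : is_pullback f g p1 p2 -> forall Q (q1 : LMap Q A) (q2 : LMap Q B),
    f \o q1 ==L g \o q2 -> exists h, p1 \o h ==L q1 /\ p2 \o h ==L q2.
Proof.
  intros [_ H] Q q1 q2 Hq. destruct (H Q q1 q2 Hq) as [h [H1 [H2 _]]]. eauto.
Qed.

Lemma pb_uniq (A B C P : Locale) (f : LMap A C) (g : LMap B C) (p1 : LMap P A) (p2 : LMap P B)
  : is_pullback f g p1 p2 -> forall Q (h h' : LMap Q P),
    p1 \o h ==L p1 \o h' -> p2 \o h ==L p2 \o h' -> h ==L h'.
Proof.
  intros [Hc H] Q h h' E1 E2.
  assert (Hq : f \o (p1 \o h) ==L g \o (p2 \o h)) by exact (ml h Hc).
  destruct (H Q _ _ Hq) as [h0 [_ [_ U]]].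
  apply mt with h0. apply U; apply mr. apply ms, U; apply ms; auto.
Qed.
Set Implicit Arguments.
Unset Strict Implicit.

Section Gr.
Variable G : OpenLocGroupoid.

Lemma act_ex (X : GLocale G) W (g : LMap W (G1 G)) (x : LMap W (gX X)) :
  gd G \o g ==L anchor X \o x -> exists k, aq1 X \o k ==L g /\ aq2 X \o k ==L x.
Proof. apply (pb_lift (actdom_pb X)). Qed.

Lemma equiv_act (X Y : GLocale G) (f : LMap (gX X) (gX Y)) (Hf : equivariant f)
  W (kX : LMap W (actdom X)) (kY : LMap W (actdom Y)) :
  aq1 Y \o kY ==L aq1 X \o kX -> aq2 Y \o kY ==L f \o aq2 X \o kX ->
  f \o act X \o kX ==L act Y \o kY.
Proof.
  intros H1 H2. destruct Hf as [Ha Hact].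
  assert (Hc : gd G \o aq1 X ==L anchor Y \o (f \o aq2 X)).
  { intro u. pose proof (proj1 (actdom_pb X) u) as E. unfold meq in *; simpl in *. rewrite E, Ha. reflexivity. }
  destruct (pb_lift (actdom_pb Y) Hc) as [K [K1 K2]].
  pose proof (Hact K K1 K2) as HK.
  assert (U : K \o kX ==L kY).
  { apply (pb_uniq (actdom_pb Y)); intro u; unfold meq in *; simpl in *; [rewrite K1, H1 | rewrite K2, H2]; reflexivity. }
  intro u. unfold meq in *; simpl in *. rewrite HK, U. reflexivity.
Qed.

Lemma fiber_trans (X : GLocale G) M (PX : PrincipalBundle X M) W (x y : LMap W (gX X)) :
  bpi PX \o x ==L bpi PX \o y -> exists k, act X \o k ==L x /\ aq2 X \o k ==L y.
Proof.
  intro H. destruct (pb_lift (kerpair_pb PX) H) as [j [J1 J2]].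
  destruct (bprincipal PX) as [t [T1 [T2 [s [S1 S2]]]]].
  exists (s \o j); split; intro u; unfold meq in *; simpl in *.
  - rewrite <- T1, S2, J1. reflexivity.
  - rewrite <- T2, S2, J2. reflexivity.
Qed.

Lemma free (X : GLocale G) M (PX : PrincipalBundle X M) W (k k' : LMap W (actdom X)) :
  act X \o k ==L act X \o k' -> aq2 X \o k ==L aq2 X \o k' -> k ==L k'.
Proof.
  intros H1 H2.
  destruct (bprincipal PX) as [t [T1 [T2 [s [S1 S2]]]]].
  assert (U : t \o k ==L t \o k').
  { apply (pb_uniq (kerpair_pb PX)); intro u; unfold meq in *; simpl in *;
      [rewrite T1; apply H1 | rewrite T2; apply H2]. }
  intro u. unfold meq in *; simpl in *. transitivity (k (t (s u))).
  - rewrite S1; reflexivity.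
  - rewrite (U (s u)), S1; reflexivity.
Qed.

Lemma unit_ex (X : GLocale G) W (x : LMap W (gX X)) :
  exists k, aq1 X \o k ==L ge G \o anchor X \o x /\ aq2 X \o k ==L x.
Proof.
  apply act_ex. intro u. pose proof (@gd_e G u) as E. unfold meq in *; simpl in *. rewrite E. reflexivity.
Qed.

Lemma unit_act (X : GLocale G) W (k : LMap W (actdom X)) :
  aq1 X \o k ==L ge G \o anchor X \o aq2 X \o k -> act X \o k ==L aq2 X \o k.
Proof.
  intro H. apply (act_unit (x := aq2 X \o k)); [intro u; exact (H u)| apply mr].
Qed.

Lemma rigid (X Y : GLocale G) M N (PX : PrincipalBundle X M) (PY : PrincipalBundle Y N)
  (f : LMap (gX X) (gX Y)) (Hf : equivariant f) W (h h' : LMap W (gX X)) :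
  bpi PX \o h ==L bpi PX \o h' -> f \o h ==L f \o h' -> h ==L h'.
Proof.
  intros Hpi Hfh.
  destruct (fiber_trans Hpi) as [k [K1 K2]].
  pose proof Hf as Hf'. destruct Hf' as [Ha _].
  destruct (act_ex (X := Y) (g := aq1 X \o k) (x := f \o h')) as [kY [KY1 KY2]].
  { intro u. pose proof (proj1 (actdom_pb X) u) as E. unfold meq in *; simpl in *. rewrite E, K2, Ha. reflexivity. }
  assert (E1 : f \o act X \o k ==L act Y \o kY).
  { apply equiv_act; auto. intro u; unfold meq in *; simpl in *. rewrite KY2, K2. reflexivity. }
  destruct (unit_ex (X := Y) (f \o h')) as [k0 [U1 U2]].
  assert (A0 : act Y \o k0 ==L aq2 Y \o k0).
  { apply unit_act. intro u; unfold meq in *; simpl in *. rewrite U1, U2. reflexivity. }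
  assert (Fr : kY ==L k0).
  { apply (free PY).
    - intro u; unfold meq in *; simpl in *. rewrite <- E1, K1, Hfh, A0, U2. reflexivity.
    - intro u; unfold meq in *; simpl in *. rewrite KY2, U2. reflexivity. }
  assert (A1 : act X \o k ==L aq2 X \o k).
  { apply unit_act. intro u; unfold meq in *; simpl in *. rewrite <- KY1, Fr, U1, Ha, K2. reflexivity. }
  intro u. unfold meq in *; simpl in *. rewrite <- K1, A1, K2. reflexivity.
Qed.

Lemma bundle_pb (X Y : GLocale G) M N (PX : PrincipalBundle X M) (PY : PrincipalBundle Y N)
  (f : LMap (gX X) (gX Y)) (Hf : equivariant f) (phi : LMap M N)
  (Hphi : bpi PY \o f ==L phi \o bpi PX) :
  is_pullback phi (bpi PY) (bpi PX) f.
Proof.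
  split; [apply ms; exact Hphi|].
  intros Q q1 q2 Hq.
  pose proof Hf as Hf'. destruct Hf' as [Ha _].
  assert (Hpc := pr_comm q1 (bpi PX)).
  assert (Hp := pb_open_surj q1 (bpi_opensurj PX)).
  revert Hpc Hp. generalize (pr1 q1 (bpi PX)) (pr2 q1 (bpi PX)). intros p x0 Hpx Hp.
  destruct (fiber_trans (PX := PY) (x := q2 \o p) (y := f \o x0)) as [kY [KY1 KY2]].
  { intro u. unfold meq in *; simpl in *. rewrite <- Hq, Hpx, Hphi. reflexivity. }
  destruct (act_ex (X := X) (g := aq1 Y \o kY) (x := x0)) as [kX [KX1 KX2]].
  { intro u. pose proof (proj1 (actdom_pb Y) u) as E. unfold meq in *; simpl in *. rewrite E, KY2, Ha. reflexivity. }
  assert (Hx1f : f \o (act X \o kX) ==L q2 \o p).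
  { assert (E1 : f \o act X \o kX ==L act Y \o kY).
    { apply equiv_act; auto.
      - intro u; unfold meq in *; simpl in *. rewrite KX1. reflexivity.
      - intro u; unfold meq in *; simpl in *. rewrite KY2, KX2. reflexivity. }
    intro u. unfold meq in *; simpl in *. rewrite E1, KY1. reflexivity. }
  assert (Hx1pi : bpi PX \o (act X \o kX) ==L q1 \o p).
  { intro u. pose proof (bpi_inv PX u) as E. unfold meq in *; simpl in *. rewrite E, KX2, Hpx. reflexivity. }
  destruct (descent Hp (x1 := act X \o kX)) as [x Hx].
  { apply (rigid (PX := PX) PY Hf).
    - intro u. pose proof (pr_comm p p (q1 u)) as E. unfold meq in *; simpl in *. rewrite Hx1pi. first [exact E | symmetry; exact E].
    - intro u. pose proof (pr_comm p p (q2 u)) as E. unfold meq in *; simpl in *. rewrite Hx1f. first [exact E | symmetry; exact E]. }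
  assert (Hps : is_surjection p) by (destruct Hp; auto).
  assert (X1 : bpi PX \o x ==L q1).
  { apply (epi_cancel Hps). intro u; unfold meq in *; simpl in *. rewrite Hx. apply Hx1pi. }
  assert (X2 : f \o x ==L q2).
  { apply (epi_cancel Hps). intro u; unfold meq in *; simpl in *. rewrite Hx. apply Hx1f. }
  exists x. split; [exact X1|split; [exact X2|]].
  intros h' H1 H2. apply (rigid (PX := PX) PY Hf).
  - apply mt with q1; auto. apply ms; auto.
  - apply mt with q2; auto. apply ms; auto.
Qed.
End Gr.
Unset Implicit Arguments.
Set Strict Implicit.


Theorem lemma3p4 (G : OpenLocGroupoid) (X1 X2 X3 X4 : GLocale G)
  (M1 M2 M3 M4 : Locale)
  (P1 : PrincipalBundle X1 M1) (P2 : PrincipalBundle X2 M2)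
  (P3 : PrincipalBundle X3 M3) (P4 : PrincipalBundle X4 M4)
  (gamma2 : LMap (gX X1) (gX X2)) (gamma3 : LMap (gX X1) (gX X3))
  (delta2 : LMap (gX X2) (gX X4)) (delta3 : LMap (gX X3) (gX X4))
  (Hg2 : equivariant gamma2) (Hg3 : equivariant gamma3)
  (Hd2 : equivariant delta2) (Hd3 : equivariant delta3)
  (Hcomm : delta2 \o gamma2 ==L delta3 \o gamma3)
  (beta2 : LMap M1 M2) (beta3 : LMap M1 M3)
  (alpha2 : LMap M2 M4) (alpha3 : LMap M3 M4)
  (Hb2 : bpi P2 \o gamma2 ==L beta2 \o bpi P1)
  (Hb3 : bpi P3 \o gamma3 ==L beta3 \o bpi P1)
  (Ha2 : bpi P4 \o delta2 ==L alpha2 \o bpi P2)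
  (Ha3 : bpi P4 \o delta3 ==L alpha3 \o bpi P3) :
  is_pullback delta2 delta3 gamma2 gamma3 <->
  is_pullback alpha2 alpha3 beta2 beta3.
Proof.
  pose proof (bundle_pb Hg2 Hb2) as PBg2.
  pose proof (bundle_pb Hg3 Hb3) as PBg3.
  pose proof (bundle_pb Hd2 Ha2) as PBd2.
  pose proof (bundle_pb Hd3 Ha3) as PBd3.
  split.
  - intro H.
    assert (Mono : forall W (h h' : LMap W M1), beta2 \o h ==L beta2 \o h' ->
                     beta3 \o h ==L beta3 \o h' -> h ==L h').
    { intros W h h' E2 E3.
      assert (Hpc := pr_comm (alpha2 \o beta2 \o h) (bpi P4)).
      assert (Hp := pb_open_surj (alpha2 \o beta2 \o h) (bpi_opensurj P4)).
      revert Hpc Hp. generalize (pr1 (alpha2 \o beta2 \o h) (bpi P4)) (pr2 (alpha2 \o beta2 \o h) (bpi P4)).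
      intros p z Hpz Hp.
      destruct (pb_lift PBd2 (q1 := beta2 \o h \o p) (q2 := z)) as [x2 [X21 X22]].
      { intro u. exact (Hpz u). }
      destruct (pb_lift PBg2 (q1 := h \o p) (q2 := x2)) as [y [Y1 Y2]].
      { intro u. symmetry. exact (X21 u). }
      destruct (pb_lift PBg2 (q1 := h' \o p) (q2 := x2)) as [y' [Y1' Y2']].
      { intro u. unfold meq in *; simpl in *. rewrite X21, E2. reflexivity. }
      assert (E33 : gamma3 \o y ==L gamma3 \o y').
      { apply (pb_uniq PBd3).
        - intro u. unfold meq in *; simpl in *. rewrite Hb3, Y1, Y1', E3. reflexivity.
        - intro u. unfold meq in *; simpl in *. rewrite <- Hcomm, Y2, Y2'. reflexivity. }
      assert (Eyy : y ==L y').
      { apply (pb_uniq H); auto. apply mt with x2; auto. apply ms; auto. }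
      destruct Hp as [_ Hps]. apply (epi_cancel Hps).
      intro u. unfold meq in *; simpl in *. rewrite <- Y1, Eyy, Y1'. reflexivity. }
    split.
    + apply (epi_cancel (proj2 (bpi_opensurj P1))).
      intro u. unfold meq in *; simpl in *. rewrite <- Hb2, <- Ha2, Hcomm, Ha3, Hb3. reflexivity.
    + intros Q q2 q3 Hq.
      assert (Hpc := pr_comm (alpha2 \o q2) (bpi P4)).
      assert (Hp := pb_open_surj (alpha2 \o q2) (bpi_opensurj P4)).
      revert Hpc Hp. generalize (pr1 (alpha2 \o q2) (bpi P4)) (pr2 (alpha2 \o q2) (bpi P4)).
      intros p z Hpz Hp.
      destruct (pb_lift PBd2 (q1 := q2 \o p) (q2 := z)) as [x2 [X21 X22]].
      { intro u. exact (Hpz u). }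
      destruct (pb_lift PBd3 (q1 := q3 \o p) (q2 := z)) as [x3 [X31 X32]].
      { intro u. unfold meq in *; simpl in *. rewrite <- Hq. exact (Hpz u). }
      destruct (pb_lift H (q1 := x2) (q2 := x3)) as [x1 [X11 X12]].
      { apply mt with z; auto. apply ms; auto. }
      destruct (descent Hp (x1 := bpi P1 \o x1)) as [m Hm].
      { apply Mono.
        - intro u. pose proof (pr_comm p p (q2 u)) as E. unfold meq in *; simpl in *.
          rewrite <- Hb2, X11, X21. exact E.
        - intro u. pose proof (pr_comm p p (q3 u)) as E. unfold meq in *; simpl in *.
          rewrite <- Hb3, X12, X31. exact E. }
      assert (Hps : is_surjection p) by (destruct Hp; auto).
      assert (M2e : beta2 \o m ==L q2).
      { apply (epi_cancel Hps). intro u. unfold meq in *; simpl in *.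
        rewrite Hm, <- Hb2, X11, X21. reflexivity. }
      assert (M3e : beta3 \o m ==L q3).
      { apply (epi_cancel Hps). intro u. unfold meq in *; simpl in *.
        rewrite Hm, <- Hb3, X12, X31. reflexivity. }
      exists m. split; [exact M2e|split; [exact M3e|]].
      intros h' H2 H3. apply Mono.
      * apply mt with q2; auto. apply ms; auto.
      * apply mt with q3; auto. apply ms; auto.
  - intro H. split; [exact Hcomm|].
    intros Q q2 q3 Hq.
    destruct (pb_lift H (q1 := bpi P2 \o q2) (q2 := bpi P3 \o q3)) as [m [M21 M31]].
    { intro u. unfold meq in *; simpl in *. rewrite <- Ha2, Hq, Ha3. reflexivity. }
    destruct (pb_lift PBg2 (q1 := m) (q2 := q2)) as [x [X1e X2e]].
    { exact M21. }
    assert (X3e : gamma3 \o x ==L q3).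
    { apply (pb_uniq PBd3).
      - intro u. unfold meq in *; simpl in *. rewrite Hb3, X1e, M31. reflexivity.
      - intro u. unfold meq in *; simpl in *. rewrite <- Hcomm, X2e, Hq. reflexivity. }
    exists x. split; [exact X2e|split; [exact X3e|]].
    intros h' H2 H3. apply (pb_uniq PBg2).
    + apply (pb_uniq H).
      * intro u. unfold meq in *; simpl in *. rewrite <- Hb2, H2, X2e. reflexivity.
      * intro u. unfold meq in *; simpl in *. rewrite <- Hb3, H3, X3e. reflexivity.
    + apply mt with q2; auto. apply ms; auto.
Qed.
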